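(* Let $Y$ be a connected, non-contractible $T_1$-space. Then $Y$ is not homotopy equivalent to any finite topological space. *)

(* Defs.v *)
From HB Require Import structures.
From mathcomp Require Import all_boot all_order all_algebra.
From mathcomp Require Import all_classical all_reals topology.
From mathcomp Require Import Rstruct Rstruct_topology.
From Stdlib Require Import Rdefinitions.

Set Implicit Arguments.
Unset Strict Implicit.
Unset Printing Implicit Defensive.

Local Open Scope classical_set_scope.
Local Open Scope ring_scope.

Definition unit_interval : Type := subspace (`[0%R, 1%R]%classic : set Rdefinitions.R).

Definition homotopic {X Y : topologicalType} (f g : X -> Y) : Prop :=
  exists H : unit_interval * X -> Y,
    continuous H /\
    (forall x : X, H (0%R : Rdefinitions.R, x) = f x) /\
    (forall x : X, H (1%R : Rdefinitions.R, x) = g x).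

Definition homotopy_equivalent (X Y : topologicalType) : Prop :=
  exists (f : X -> Y) (g : Y -> X),
    continuous f /\ continuous g /\
    homotopic (g \o f) idfun /\ homotopic (f \o g) idfun.

Definition contractible (X : topologicalType) : Prop :=
  exists x0 : X, homotopic (@idfun X) (fun _ : X => x0).

Definition connected_space (X : topologicalType) : Prop :=
  [set: X] !=set0 /\ connected [set: X].

Definition T1_space (X : topologicalType) : Prop := @accessible_space X.

Definition finite_space (X : topologicalType) : Prop := finite_set [set: X].

(* Main.v *)
Require Import Defs.
From HB Require Import structures.
From mathcomp Require Import all_boot all_order all_algebra.
From mathcomp Require Import all_classical all_reals topology normedtype.
From mathcomp Require Import Rstruct Rstruct_topology.
From Stdlib Require Import Rdefinitions RIneq.

Set Implicit Arguments.
Unset Strict Implicit.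
Unset Printing Implicit Defensive.
Import Order.TTheory GRing.Theory Num.Theory.
Local Open Scope classical_set_scope.
Local Open Scope ring_scope.

Definition revR (t : Rdefinitions.R) : Rdefinitions.R := 1 - t.

Lemma revR_fun : set_fun (`[0%R, 1%R]%classic : set Rdefinitions.R)
  (`[0%R, 1%R]%classic : set Rdefinitions.R) revR.
Proof.
move=> t; rewrite /= !in_itv /= /revR => /andP[h0 h1].
apply/andP; split; first by rewrite subr_ge0.
by rewrite lerBlDr lerDl.
Qed.

HB.instance Definition _ := isFun.Build _ _ _ _ revR revR_fun.

Lemma revR_contR : continuous revR.
Proof.
move=> x; have -> : revR = (fun _ => 1) - id by [].
apply: (@continuousB _ Rdefinitions.R^o Rdefinitions.R (fun _ => 1) id).
  exact: cst_continuous.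
exact: cvg_id.
Qed.

Lemma revR_cont : continuous (revR : unit_interval -> unit_interval).
Proof.
have := @subspaceT_continuous Rdefinitions.R _ `[0%R, 1%R]%classic `[0%R, 1%R]%classic revR.
apply=> x; apply: continuous_subspaceT => {}x.
exact: revR_contR.
Qed.

Lemma homotopic_sym (X Y : topologicalType) (f g : X -> Y) :
  homotopic f g -> homotopic g f.
Proof.
case=> H [Hc [H0 H1]].
exists (fun p : unit_interval * X => H (revR p.1, p.2)); split; last first.
  split=> x /=; rewrite /revR; [rewrite Rminus_0_r; exact: H1 | rewrite Rminus_diag; exact: H0].
move=> p.
apply: (@continuous_comp _ _ _ (fun p : unit_interval * X => ((revR p.1 : unit_interval), p.2)) H).
  apply: cvg_pair.
    apply: (@continuous_comp _ _ _ fst (revR : unit_interval -> unit_interval)).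
      exact: cvg_fst.
    exact: revR_cont.
  exact: cvg_snd.
exact: Hc.
Qed.

Lemma const_of_finite_range (Y : topologicalType) (h : Y -> Y) :
  connected_space Y -> T1_space Y -> continuous h -> finite_set (range h) ->
  exists y0, forall x, h x = y0.
Proof.
case=> [[x0 _] Yc] T1 hc fin; exists (h x0).
set A := h @^-1` [set h x0].
suff AT : A = setT by move=> x; have : A x by rewrite AT.
have cA : closed A.
  by move/continuous_closedP: hc; apply; exact: accessible_closed_set1.
have AC : A = ~` (h @^-1` (range h `\ h x0)).
  apply/seteqP; split => x /=.
    by rewrite /A /= => ->; case.
  move=> H; apply: contrapT => nx; apply: H; split => //; by exists x.
have oA : open A.
  rewrite AC openC; move/continuous_closedP: hc; apply.
  move: T1; rewrite /T1_space accessible_finite_set_closed; apply.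
  exact: finite_setD.
apply: Yc.
- by exists x0.
- by exists A => //; rewrite setTI.
- by exists A => //; rewrite setTI.
Qed.

Theorem mainTheorem6 (Y : topologicalType) :
  connected_space Y -> T1_space Y -> ~ contractible Y ->
  forall F : topologicalType, finite_space F -> ~ homotopy_equivalent Y F.
Proof.
move=> Yc T1 nc F Ff [f [g [fc [gc [hgf _]]]]].
have gfc : continuous (g \o f) by move=> x; apply: continuous_comp; [exact: fc | exact: gc].
have fin : finite_set (range (g \o f)).
  apply: (@sub_finite_set _ _ (g @` setT)); last exact: finite_image.
  by move=> _ [x _ <-]; exists (f x).
have [y0 Hy0] := const_of_finite_range Yc T1 gfc fin.
apply: nc; exists y0; apply: homotopic_sym.
have <- : g \o f = (fun _ => y0) by apply: funext => x; exact: Hy0.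
exact: hgf.
Qed.
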